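(* Under the fixed admissible embedding $K\hookrightarrow M_2(\mathbb{Q})$, let $h_0$ be the point of the upper half plane fixed by $K^\times$ and write the image of $\varpi_c=\frac{cD+c\sqrt{D}}{2}$ as $\begin{pmatrix} x & y\\ z & w\end{pmatrix}$. Then $K=\mathbb{Q}+\mathbb{Q}h_0$ and $\mathcal{O}_c=\mathbb{Z}+\mathbb{Z}\, y h_0^{-1}$.
   Context: $K$ is an imaginary quadratic field of discriminant $D$, $c$ is a positive integer coprime to $N=N_0N_1^2$, and $\mathcal{O}_c=\mathbb{Z}+c\mathcal{O}_K=\mathbb{Z}+\mathbb{Z}\varpi_c$ with $\varpi_c=\frac{cD+c\sqrt{D}}{2}$. The embedding $K\hookrightarrow M_2(\mathbb{Q})$ is admissible, i.e. $K\cap M_2(\mathbb{Z})=K\cap R_0(N_0)=\mathcal{O}_c$, where $R_0(N_0)$ is the set of integer matrices that are upper triangular mod $N_0$. The entry $z$ is nonzero since $K$ is a field. *)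

(* Defs.v *)
(* K is modelled as the subfield Q(sqrt D) of algC. *)
From HB Require Import structures.
From mathcomp Require Import all_boot all_order all_algebra all_field.
Set Implicit Arguments. Unset Strict Implicit. Unset Printing Implicit Defensive.
Import Order.TTheory GRing.Theory Num.Theory.
Local Open Scope ring_scope.

Definition sqfree_int (m : int) : Prop :=
  forall d : int, (d * d %| m)%Z -> `|d| = 1.

Definition fund_disc (D : int) : Prop :=
  ((D %% 4)%Z = 1 /\ sqfree_int D) \/
  (exists m : int, D = 4 * m /\ ((m %% 4)%Z = 2 \/ (m %% 4)%Z = 3) /\ sqfree_int m).

(* sqrt D in C, principal branch (for D < 0 : i sqrt|D|) *)
Definition sqrtD (D : int) : algC := sqrtC (D%:~R).

Definition Kset (D : int) (a : algC) : Prop :=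
  exists p q : rat, a = ratr p + ratr q * sqrtD D.

Definition varpi (D : int) (c : nat) : algC :=
  (c%:R * D%:~R + c%:R * sqrtD D) / 2%:R.

Definition Oc (D : int) (c : nat) (a : algC) : Prop :=
  exists m n : int, a = m%:~R + n%:~R * varpi D c.

Definition i0 : 'I_2 := ord0.
Definition i1 : 'I_2 := ord_max.

Definition int_mx (A : 'M[rat]_2) : Prop := forall i j, A i j \is a Num.int.

Definition R0 (N0 : nat) (A : 'M[rat]_2) : Prop :=
  int_mx A /\ exists k : int, A i1 i0 = ((N0%:Z * k)%R)%:~R.

Definition ring_emb (D : int) (phi : algC -> 'M[rat]_2) : Prop :=
  phi 1 = 1 /\
  (forall a b, Kset D a -> Kset D b -> phi (a + b) = phi a + phi b) /\
  (forall a b, Kset D a -> Kset D b -> phi (a * b) = phi a * phi b).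

(* admissibility: K ∩ M_2(Z) = K ∩ R_0(N0) = O_c (K identified with its image) *)
Definition admissible (D : int) (c N0 : nat) (phi : algC -> 'M[rat]_2) : Prop :=
  forall A : 'M[rat]_2, (exists a, Kset D a /\ A = phi a) ->
    (int_mx A <-> exists a, Oc D c a /\ A = phi a) /\
    (R0 N0 A <-> exists a, Oc D c a /\ A = phi a).

Definition mobius (A : 'M[rat]_2) (h : algC) : algC :=
  (ratr (A i0 i0) * h + ratr (A i0 i1)) / (ratr (A i1 i0) * h + ratr (A i1 i1)).

(* Main.v *)
Require Import Defs.
From HB Require Import structures.
From mathcomp Require Import all_boot all_order all_algebra all_field.
From mathcomp Require Import ring lra.
Import Order.TTheory GRing.Theory Num.Theory.
Local Open Scope ring_scope.

Lemma mx_int_entry (k : int) (i j : 'I_2) :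
  (k%:~R : 'M[rat]_2) i j = (k%:~R : rat) *+ (i == j).
Proof.
have -> : (k%:~R : 'M[rat]_2) = (k%:~R : rat)%:M.
  by rewrite -scalemx1 scaler_int.  
by rewrite mxE.
Qed.

Lemma mxM2 (A B : 'M[rat]_2) (i j : 'I_2) :
  (A * B) i j = A i i0 * B i0 j + A i i1 * B i1 j.
Proof. rewrite -mulmxE mxE. rewrite big_ord_recl. rewrite big_ord1.
have -> : lift ord0 ord0 = i1 by apply: val_inj.
by []. Qed.
Lemma phi_int (D : int) (phi : algC -> 'M[rat]_2) :
  ring_emb D phi -> forall k : int, phi k%:~R = k%:~R.
Proof.
move=> [h1 [hD hM]].
have Ki : forall k : int, Kset D k%:~R.
  by move=> k; exists k%:~R, 0; rewrite ratr_int rmorph0 mul0r addr0.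
have p0 : phi 0 = 0.
  have := hD 0 0 (Ki 0) (Ki 0); rewrite addr0 => /(congr1 (fun t => t - phi 0)).
  by rewrite subrr addrK.
have pn : forall n : nat, phi n%:R = n%:R.
  elim=> [|n IH]; first by rewrite p0.
  rewrite -natr1 hD; [by rewrite IH h1 natr1 | exact: (Ki n) | exact: (Ki 1)].
have pN : forall a, Kset D a -> phi (- a) = - phi a.
  move=> a Ka; have Kna : Kset D (- a).
    by case: Ka => [p [q ->]]; exists (-p), (-q); rewrite !rmorphN mulNr opprD.
  by apply/eqP; rewrite -addr_eq0 -(hD _ _ Kna Ka) addNr p0.
case=> n; first exact: pn.
by rewrite NegzE mulrNz pN ?pn.
Qed.

Lemma rD (a b : rat) : (ratr (a + b) : algC) = ratr a + ratr b.
Proof. exact: rmorphD. Qed.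
Lemma rB (a b : rat) : (ratr (a - b) : algC) = ratr a - ratr b.
Proof. exact: rmorphB. Qed.
Lemma rM (a b : rat) : (ratr (a * b) : algC) = ratr a * ratr b.
Proof. exact: rmorphM. Qed.
Lemma rN (a : rat) : (ratr (- a) : algC) = - ratr a.
Proof. exact: rmorphN. Qed.
Lemma rV (a : rat) : (ratr (a^-1) : algC) = (ratr a)^-1.
Proof. exact: fmorphV. Qed.
Lemma rMn (a : rat) n : (ratr (a *+ n) : algC) = ratr a *+ n.
Proof. exact: rmorphMn. Qed.

Theorem lemma2p3 (D : int) (c N0 N1 : nat) (phi : algC -> 'M[rat]_2) (h0 : algC) :
  D < 0 -> fund_disc D ->
  (0 < c)%N -> (0 < N0)%N -> (0 < N1)%N -> coprime c (N0 * N1 ^ 2) ->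
  ring_emb D phi -> admissible D c N0 phi ->
  0 < 'Im h0 ->
  (forall a, Kset D a -> a != 0 -> mobius (phi a) h0 = h0) ->
  let y := phi (varpi D c) i0 i1 in
  (forall a : algC, Kset D a <-> exists p q : rat, a = ratr p + ratr q * h0) /\
  (forall a : algC, Oc D c a <-> exists m n : int, a = m%:~R + n%:~R * (ratr y / h0)).
Proof.
move=> Dlt0 _ c0 _ _ _ emb adm Imh hfix y.
have pint := @phi_int D phi emb.
case: emb => [h1 [hD hM]].
set s := sqrtD D.
have s2 : s ^+ 2 = D%:~R by rewrite /s /sqrtD sqrtCK.
have Kvp : Kset D (varpi D c).
  exists ((c%:R * D%:~R) / 2), (c%:R / 2).
  rewrite /varpi !(rmorphM, fmorphV, rmorph_nat, rmorph_int) -/s. field.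
  done.
have Kcs : Kset D (c%:R * s).
  by exists 0, c%:R; rewrite rmorph0 add0r rmorph_nat.
have Ki : forall k : int, Kset D k%:~R.
  by move=> k; exists k%:~R, 0; rewrite ratr_int rmorph0 mul0r addr0.
set W := phi (varpi D c).
have hcs : phi (c%:R * s) = W + W - (c%:Z * D)%:~R.
  have e : varpi D c + varpi D c = (c%:Z * D)%:~R + c%:R * s.
    rewrite /varpi -/s intrM. by field.
  have := hD _ _ Kvp Kvp; rewrite e hD // pint => E.
  by rewrite -/W -E addrC addKr.
have hcs2 : (W + W - (c%:Z * D)%:~R) * (W + W - (c%:Z * D)%:~R) = (c%:Z ^+ 2 * D)%:~R.
  rewrite -hcs -hM //.
  have -> : c%:R * s * (c%:R * s) = (c%:Z ^+ 2 * D)%:~R.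
    by rewrite intrM -s2 rmorphXn /=; ring.
  exact: pint.

set x := W i0 i0. set z := W i1 i0. set w := W i1 i1.
have E00 := congr1 (fun A : 'M[rat]_2 => A i0 i0) hcs2.
have E10 := congr1 (fun A : 'M[rat]_2 => A i1 i0) hcs2.
rewrite /= !mxM2 !mxE !mx_int_entry /= -/x -/y -/z -/w in E00 E10.
rewrite !mulr0n !mulr1n !subr0 in E00 E10.
set k1 : rat := (c%:Z * D)%:~R in E00 E10.
set k2 : rat := (c%:Z ^+ 2 * D)%:~R in E00.
have k2lt0 : k2 < 0.
  by rewrite /k2 ltrz0 pmulr_rlt0 // exprn_gt0 // ltz_nat.
have z0 : z != 0.
  apply/negP => /eqP z0; rewrite z0 !addr0 mulr0 addr0 in E00.
  have : 0 <= (x + x - k1) * (x + x - k1) by rewrite -expr2 sqr_ge0.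
  by rewrite E00 leNgt k2lt0.
have ew : w = k1 - x.
  have : (z + z) * ((x + x - k1) + (w + w - k1)) = 0.
    by rewrite -E10; ring.
  move/eqP; rewrite mulf_eq0 (negPf (_ : z + z != 0)) /=; last first.
    by rewrite -mulr2n mulrn_eq0 negb_or z0.
  move/eqP => H. apply: (@mulIf _ 2) => //. rewrite mulrBl.
  apply/eqP; rewrite -subr_eq0; apply/eqP; rewrite -H; ring.
have c0' : (c%:R : algC) != 0 by rewrite pnatr_eq0 -lt0n.
have s0 : s != 0.
  apply/negP => /eqP s0; move: s2; rewrite s0 expr0n /= => /eqP.
  by rewrite eq_sym intr_eq0 => /eqP D0; move: Dlt0; rewrite D0.
have vp0 : varpi D c != 0.
  apply/negP => /eqP v0.
  have sD : s = - D%:~R.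
    move: v0; rewrite /varpi -/s => /eqP; rewrite mulf_eq0 invr_eq0 pnatr_eq0 orbF.
    rewrite -mulrDr mulf_eq0 (negPf c0') /= addr_eq0 => /eqP.
    by move=> ->; rewrite opprK.
  move: s2; rewrite sD sqrrN -rmorphXn /= => /eqP; rewrite eqr_int => /eqP.
  move=> H; have : D * (D - 1) = 0 by rewrite mulrBr mulr1 -expr2 H subrr.
  move/eqP; rewrite mulf_eq0 => /orP [/eqP D0|]; first by move: Dlt0; rewrite D0.
  by rewrite subr_eq0 => /eqP D1; move: Dlt0; rewrite D1.
have h00 : h0 != 0.
  by apply/negP => /eqP e; move: Imh; rewrite e raddf0 ltxx.
have mob := hfix _ Kvp vp0.
rewrite /mobius -/W -/x -/y -/z -/w in mob.
set X : algC := ratr x in mob. set Y : algC := ratr y in mob.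
set Z : algC := ratr z in mob. set Wv : algC := ratr w in mob.
have den0 : Z * h0 + Wv != 0.
  apply/negP => /eqP e; move: mob; rewrite e invr0 mulr0 => e2.
  by move: h00; rewrite -e2 eqxx.
have Q : Z * h0 ^+ 2 + (Wv - X) * h0 - Y = 0.
  move: mob => /(congr1 (fun t => t * (Z * h0 + Wv))).
  rewrite mulfVK // => e.
  have -> : Z * h0 ^+ 2 + (Wv - X) * h0 - Y = h0 * (Z * h0 + Wv) - (X * h0 + Y) by ring.
  by rewrite -e subrr.
set K1 : algC := c%:R * D%:~R.
have eK1 : ratr k1 = K1 by rewrite /k1 ratr_int intrM.
have eK2 : ratr k2 = c%:R ^+ 2 * s ^+ 2 by rewrite /k2 ratr_int intrM rmorphXn s2.
have E00' : (X + X - K1) * (X + X - K1) + (Y + Y) * (Z + Z) = c%:R ^+ 2 * s ^+ 2.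
  by rewrite -eK2 -E00 -eK1 !(rmorphD, rmorphM, rmorphN).
have eW : Wv = K1 - X by rewrite /Wv ew -eK1 rmorphB.
rewrite eW in Q.
set u := Z * h0 *+ 2 + K1 - X *+ 2.
have hu : (u - c%:R * s) * (u + c%:R * s) = 0.
  have -> : (u - c%:R * s) * (u + c%:R * s) =
     Z *+ 4 * (Z * h0 ^+ 2 + (K1 - X - X) * h0 - Y)
     + ((X + X - K1) * (X + X - K1) + (Y + Y) * (Z + Z) - c%:R ^+ 2 * s ^+ 2).
    rewrite /u; ring.
  by rewrite Q E00' mulr0 subrr addr0.
have Z0 : Z != 0 by rewrite fmorph_eq0.
have two0 : (2 : algC) != 0 by rewrite pnatr_eq0.
have [sg [sg2 esg]] : exists sg : int, sg * sg = 1 /\ u = sg%:~R * (c%:R * s).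
  move/eqP: hu; rewrite mulf_eq0 subr_eq0 addr_eq0 => /orP [/eqP e|/eqP e].
    by exists 1; rewrite e !mul1r.
  by exists (-1); split => //; rewrite e mulN1r.
have sg2' : (sg%:~R : algC) * sg%:~R = 1 by rewrite -intrM sg2.
have hs : s = sg%:~R * u / c%:R.
  by rewrite esg mulrA sg2' mul1r mulrC mulKf.
have hh : h0 = (sg%:~R * (c%:R * s) - K1 + X *+ 2) / (Z *+ 2).
  rewrite -esg /u. field. by rewrite Z0.
split.
  move=> a; split.
    case=> p [q ->].
    exists (p + q * sg%:~R * (k1 - x *+ 2) / c%:R), (q * sg%:~R * z *+ 2 / c%:R).
    rewrite -/s !(rD, rM, rN, rB, rV, ratr_int, ratr_nat, rMn) -/X -/Z intrM.
    rewrite {1}hs /u /K1. field. done.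
  case=> p [q ->].
  exists (p + q * (x *+ 2 - k1) / (z *+ 2)), (q * sg%:~R * c%:R / (z *+ 2)).
  rewrite -/s !(rD, rM, rN, rB, rV, ratr_int, ratr_nat, rMn) -/X -/Z intrM.
  rewrite {1}hh /K1. field. by rewrite fmorph_eq0.
have intW : int_mx W.
  have := adm W (ex_intro _ (varpi D c) (conj Kvp erefl)).
  case=> [[_ H] _]; apply: H. exists (varpi D c); split => //.
  by exists 0, 1; rewrite mul1r add0r.
have [kx ekx] : exists k : int, X = k%:~R.
  by case/intrP: (intW i0 i0) => k ek; exists k; rewrite /X /x ek ratr_int.
have [kw ekw] : exists k : int, Wv = k%:~R.
  by case/intrP: (intW i1 i1) => k ek; exists k; rewrite /Wv /w ek ratr_int.
have eY : Y = Z * h0 ^+ 2 + (K1 - X - X) * h0.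
  by apply/eqP; rewrite eq_sym -subr_eq0 Q.
have hY : Y / h0 = Z * h0 + K1 - X *+ 2.
  rewrite eY; field; done.
have eZ : Z * h0 = (sg%:~R * (c%:R * s) - K1 + X *+ 2) / 2.
  rewrite -esg /u; field; done.
have [k ek] : exists k : int, Y / h0 = sg%:~R * varpi D c + k%:~R.
  have : (sg - 1) * (sg + 1) = 0.
    have -> : (sg - 1) * (sg + 1) = sg * sg - 1 by ring.
    by rewrite sg2 subrr.
  move/eqP; rewrite mulf_eq0 subr_eq0 addr_eq0 => /orP [/eqP e1|/eqP e1].
    exists (- kx); rewrite hY eZ e1 /varpi -/s /K1 mulrNz -ekx; field; done.
  exists kw; rewrite hY eZ e1 /varpi -/s -ekw eW /K1; field; done.
rewrite /= in ek. rewrite -/Y ek.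
move=> a; split.
  case=> m [n ->].
  exists (m - n * sg * k), (n * sg).
  have -> : m%:~R + n%:~R * varpi D c =
     m%:~R + n%:~R * (sg%:~R * sg%:~R * varpi D c) :> algC by rewrite sg2' mul1r.
  ring.
case=> m [n ->].
exists (m + n * k), (n * sg).
rewrite !(intrD, intrM); ring.
Qed.
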